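(* Let $D\in\mathbb{R}^{n\times n}$, $\lambda,\mu>0$, and let $\mathcal V,\mathcal W\subseteq\mathbb{R}^{n\times n}$ be arbitrary subsets. For $X\in\mathbb{R}^{n\times n}$ and $c>0$ let $\mathcal U_c(X)=\{\Delta\in\mathbb{R}^{n\times n}:\|\Delta\|_F\le c\|X\|_F\}$. Then the robust optimization problem $$\min_{X\in\mathcal V,\,Y\in\mathcal W}\ \max_{\Delta_1\in\mathcal U_\lambda(X),\,\Delta_2\in\mathcal U_\mu(Y)}\ \|D+\Delta_1+\Delta_2-X-Y\|_F$$ is equivalent to the regularized problem $$\min_{X\in\mathcal V,\,Y\in\mathcal W}\ \|D-X-Y\|_F+\lambda\|X\|_F+\mu\|Y\|_F,$$ in the sense that they have the same optimal value and the same optimal solutions.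
   Context: $\|\cdot\|_F$ denotes the Frobenius norm. *)

(* Defs.v *)
From HB Require Import structures.
From mathcomp Require Import all_boot all_order all_algebra.
From mathcomp Require Import all_classical all_reals.
From mathcomp Require Import ereal.
Set Implicit Arguments. Unset Strict Implicit. Unset Printing Implicit Defensive.
Import Order.TTheory GRing.Theory Num.Theory.
Local Open Scope ring_scope.
Local Open Scope classical_set_scope.

Definition frob (R : realType) (n : nat) (A : 'M[R]_n) : R :=
  Num.sqrt (\sum_(i < n) \sum_(j < n) A i j ^+ 2).

Definition Uset (R : realType) (n : nat) (c : R) (X : 'M[R]_n) : set 'M[R]_n :=
  [set Delta | frob Delta <= c * frob X].

Definition robust_obj (R : realType) (n : nat) (D : 'M[R]_n) (lam mu : R)
    (X Y : 'M[R]_n) : \bar R :=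
  ereal_sup [set z : \bar R | exists D1 D2 : 'M[R]_n,
     [/\ Uset lam X D1, Uset mu Y D2 & z = (frob (D + D1 + D2 - X - Y))%:E] ].

Definition reg_obj (R : realType) (n : nat) (D : 'M[R]_n) (lam mu : R)
    (X Y : 'M[R]_n) : \bar R :=
  (frob (D - X - Y) + lam * frob X + mu * frob Y)%:E.

Definition opt_value (R : realType) (n : nat) (V W : set 'M[R]_n)
    (f : 'M[R]_n -> 'M[R]_n -> \bar R) : \bar R :=
  ereal_inf [set z : \bar R | exists X Y, [/\ V X, W Y & z = f X Y] ].

Definition is_opt_sol (R : realType) (n : nat) (V W : set 'M[R]_n)
    (f : 'M[R]_n -> 'M[R]_n -> \bar R) (X Y : 'M[R]_n) : Prop :=
  [/\ V X, W Y & forall X' Y', V X' -> W Y' -> (f X Y <= f X' Y')%E].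

(* Main.v *)
Require Import Defs.
From HB Require Import structures.
From mathcomp Require Import all_boot all_order all_algebra.
From mathcomp Require Import all_classical all_reals.
From mathcomp Require Import ereal.
From mathcomp Require Import lra.
Import Order.TTheory GRing.Theory Num.Theory.
Local Open Scope ring_scope.
Local Open Scope classical_set_scope.

Section Frob.
Variables (R : realType) (n : nat).
Implicit Types (A B : 'M[R]_n).

Definition ip A B : R := \sum_(i < n) \sum_(j < n) A i j * B i j.

Local Lemma frobE A : frob A = Num.sqrt (ip A A).
Proof. by rewrite /frob /ip; apply: congr1; apply: eq_bigr => i _; apply: eq_bigr => j _; rewrite expr2. Qed.

Local Lemma ipC A B : ip A B = ip B A.
Proof. by apply: eq_bigr => i _; apply: eq_bigr => j _; rewrite mulrC. Qed.

Local Lemma ipDl A B C : ip (A + B) C = ip A C + ip B C.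
Proof.
rewrite /ip -big_split; apply: eq_bigr => i _; rewrite -big_split.
by apply: eq_bigr => j _; rewrite !mxE mulrDl.
Qed.

Local Lemma ipZl a A B : ip (a *: A) B = a * ip A B.
Proof.
rewrite /ip mulr_sumr; apply: eq_bigr => i _; rewrite mulr_sumr.
by apply: eq_bigr => j _; rewrite !mxE mulrA.
Qed.

Local Lemma ipDr A B C : ip C (A + B) = ip C A + ip C B.
Proof. by rewrite ipC ipDl ![ip _ C]ipC. Qed.

Local Lemma ipZr a A B : ip B (a *: A) = a * ip B A.
Proof. by rewrite ipC ipZl ipC. Qed.

Local Lemma ipNl A B : ip (- A) B = - ip A B.
Proof. by rewrite -scaleN1r ipZl mulN1r. Qed.

Local Lemma ipNr A B : ip B (- A) = - ip B A.
Proof. by rewrite ipC ipNl ipC. Qed.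

Local Lemma ip_ge0 A : 0 <= ip A A.
Proof. by apply: sumr_ge0 => i _; apply: sumr_ge0 => j _; rewrite -expr2 sqr_ge0. Qed.

Local Lemma ip_eq0 A : ip A A = 0 -> A = 0.
Proof.
move=> /eqP; rewrite psumr_eq0; last first.
  by move=> i _; apply: sumr_ge0 => j _; rewrite -expr2 sqr_ge0.
move=> /allP H; apply/matrixP => i j; rewrite mxE.
have /implyP := H i (mem_index_enum _) => /(_ isT).
rewrite psumr_eq0; last by move=> k _; rewrite -expr2 sqr_ge0.
move=> /allP /(_ j (mem_index_enum _)) /= /eqP.
by rewrite -expr2 => /eqP; rewrite sqrf_eq0 => /eqP.
Qed.

Local Lemma frob_ge0 A : 0 <= frob A.
Proof. exact: sqrtr_ge0. Qed.

Local Lemma frob_sq A : frob A ^+ 2 = ip A A.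
Proof. by rewrite frobE sqr_sqrtr // ip_ge0. Qed.

Local Lemma ip0l A : ip 0 A = 0.
Proof. by rewrite -(scale0r 0) ipZl mul0r. Qed.

Local Lemma frob0 A : frob A = 0 -> A = 0.
Proof. by move=> H; apply: ip_eq0; rewrite -frob_sq H expr0n. Qed.

Local Lemma cs A B : ip A B <= frob A * frob B.
Proof.
set a := frob A; set b := frob B.
have ha : 0 <= a := frob_ge0 A. have hb : 0 <= b := frob_ge0 B.
have H := ip_ge0 (b *: A - a *: B).
rewrite !(ipDl, ipDr, ipZl, ipZr, ipNl, ipNr) -!frob_sq -/a -/b (ipC B A) in H.
have H2 : 0 <= a * b * (a * b - ip A B) by nra.
have [ab0|abgt0] := eqVneq (a * b) 0.
  move: (ab0) => /eqP; rewrite mulf_eq0 => /orP [] /eqP h.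
    by rewrite (frob0 _ h) ip0l ab0.
  by rewrite ipC (frob0 _ h) ip0l ab0.
have abp : 0 < a * b by rewrite lt_def abgt0 mulr_ge0.
by rewrite -subr_ge0; rewrite pmulr_rge0 in H2.
Qed.

Local Lemma frobD A B : frob (A + B) <= frob A + frob B.
Proof.
rewrite {1}frobE -(ger0_norm (addr_ge0 (frob_ge0 A) (frob_ge0 B))) -sqrtr_sqr.
rewrite ler_sqrt ?sqr_ge0 //.
rewrite !(ipDl, ipDr) (ipC B A) -!frob_sq.
have := cs A B; lra.
Qed.

Local Lemma frobZ a A : frob (a *: A) = `|a| * frob A.
Proof. by rewrite !frobE ipZl ipZr mulrA -expr2 sqrtrM ?sqr_ge0 // sqrtr_sqr. Qed.

Local Lemma unit_dir A : (0 < n)%N -> exists U, frob U = 1 /\ A = frob A *: U.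
Proof.
move=> n0.
have [a0|an0] := eqVneq (frob A) 0.
  set C : 'M[R]_n := const_mx 1.
  have C0 : frob C != 0.
    apply/eqP => /(frob0 C) /matrixP /(_ (Ordinal n0) (Ordinal n0)).
    by rewrite !mxE => /eqP; rewrite oner_eq0.
  exists ((frob C)^-1 *: C); split.
    by rewrite frobZ ger0_norm ?invr_ge0 ?frob_ge0 // mulVf.
  by rewrite a0 scale0r (frob0 _ a0).
exists ((frob A)^-1 *: A); split.
  by rewrite frobZ ger0_norm ?invr_ge0 ?frob_ge0 // mulVf.
by rewrite scalerA mulfV // scale1r.
Qed.

Local Lemma frob_n0 A : n = 0%N -> frob A = 0.
Proof. by move=> n0; rewrite /frob; move: A; rewrite n0 => A; rewrite big_ord0 sqrtr0. Qed.

End Frob.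
Arguments frobD {R n}.
Arguments frob_ge0 {R n}.
Arguments frobZ {R n}.
Arguments unit_dir {R n}.
Arguments frob_n0 {R n}.

Lemma key (R : realType) (n : nat) (D : 'M[R]_n) (lam mu : R) X Y :
  0 < lam -> 0 < mu -> robust_obj D lam mu X Y = reg_obj D lam mu X Y.
Proof.
move=> hl hm.
have eqA : forall D1 D2 : 'M[R]_n, D + D1 + D2 - X - Y = (D - X - Y) + D1 + D2.
  by move=> D1 D2; apply/matrixP => i j; rewrite !mxE; lra.
apply/eqP; rewrite eq_le; apply/andP; split.
  apply: ge_ereal_sup => z [D1 [D2 [h1 h2 ->]]].
  rewrite lee_fin eqA /Uset /= in h1 h2 *.
  idtac.
  have := frobD (D - X - Y + D1) D2; have := frobD (D - X - Y) D1.
  move: h1 h2; lra.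
apply: ereal_sup_ubound.
have [n0|nn0] := posnP n.
  by exists 0, 0; split; rewrite /Uset /reg_obj /= ?frob_n0 // ?mulr0 ?addr0.
have [U [U1 HU]] := unit_dir (D - X - Y) nn0.
have hx := frob_ge0 X; have hy := frob_ge0 Y; have ha := frob_ge0 (D - X - Y).
exists ((lam * frob X) *: U), ((mu * frob Y) *: U); split; rewrite /Uset /=.
- by rewrite frobZ U1 mulr1 ger0_norm // mulr_ge0 // ltW.
- by rewrite frobZ U1 mulr1 ger0_norm // mulr_ge0 // ltW.
rewrite eqA {1}HU -!scalerDl frobZ U1 mulr1 ger0_norm //.
by rewrite !addr_ge0 // mulr_ge0 // ltW.
Qed.

Theorem proposition3 (R : realType) (n : nat) (D : 'M[R]_n) (lam mu : R)
    (V W : set 'M[R]_n) :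
  0 < lam -> 0 < mu ->
  opt_value V W (robust_obj D lam mu) = opt_value V W (reg_obj D lam mu) /\
  (forall X Y : 'M[R]_n,
     is_opt_sol V W (robust_obj D lam mu) X Y <->
     is_opt_sol V W (reg_obj D lam mu) X Y).
Proof.
move=> hl hm.
have -> : robust_obj D lam mu = reg_obj D lam mu.
  by apply: funext => X; apply: funext => Y; apply: key.
by split.
Qed.
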